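(* For all record types $\rho,\rho_1,\rho_2,\rho_3\in\mathbb{T}_R$: (1) if $\rho_1=\rho_2$ then $\mathit{lbl}(\rho_1)=\mathit{lbl}(\rho_2)$; (2) if $\mathit{lbl}(\rho_1)\cap\mathit{lbl}(\rho_2)=\emptyset$ then $\rho_1+\rho_2=\rho_1\cap\rho_2$; (3) if $\mathit{lbl}(\rho_1)\subseteq\mathit{lbl}(\rho_2)$ then $\rho_1+\rho_2=\rho_2$; (4) if $\mathit{lbl}(\rho_2)=\mathit{lbl}(\rho_3)$ then $(\rho_1+\rho_2)\cap(\rho_1+\rho_3)=\rho_1+(\rho_2\cap\rho_3)$.
   Context: $\mathbb{T}\ni\sigma ::= a\mid\omega\mid\sigma_1\to\sigma_2\mid\sigma_1\cap\sigma_2\mid\rho$ and record types $\mathbb{T}_R\ni\rho ::= \langle\rangle\mid\langle l:\sigma\rangle\mid\rho_1+\rho_2\mid\rho_1\cap\rho_2$. Subtyping $\le$ is the least preorder with: $\sigma\le\omega$; $\omega\le\omega\to\omega$; $\sigma\cap\tau\le\sigma$; $\sigma\cap\tau\le\tau$; $\sigma\le\tau_1,\sigma\le\tau_2\Rightarrow\sigma\le\tau_1\cap\tau_2$; $(\sigma\to\tau_1)\cap(\sigma\to\tau_2)\le\sigma\to\tau_1\cap\tau_2$; $\sigma_2\le\sigma_1,\tau_1\le\tau_2\Rightarrow\sigma_1\to\tau_1\le\sigma_2\to\tau_2$; $\langle l:\sigma\rangle\le\langle\rangle$; $\langle l:\sigma\rangle\cap\langle l:\tau\rangle\le\langle l:\sigma\cap\tau\rangle$;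 $\sigma\le\tau\Rightarrow\langle l:\sigma\rangle\le\langle l:\tau\rangle$; $\rho+\langle\rangle=\langle\rangle+\rho=\rho$; $(\rho_1+\rho_2)+\rho_3=\rho_1+(\rho_2+\rho_3)$; $(\rho_1\cap\rho_2)+\rho_3=(\rho_1+\rho_3)\cap(\rho_2+\rho_3)$; $\langle l:\sigma\rangle+(\langle l:\tau\rangle\cap\rho)=\langle l:\tau\rangle\cap\rho$; $\langle l:\sigma\rangle+(\langle l':\tau\rangle\cap\rho)=\langle l':\tau\rangle\cap(\langle l:\sigma\rangle+\rho)$ if $l\neq l'$; $\rho_1\le\rho_2\Rightarrow\rho_1+\rho\le\rho_2+\rho$; $\rho_1=\rho_2\Rightarrow\rho+\rho_1=\rho+\rho_2$. $=$ means $\le$ in both directions. The label map on record types: $\mathit{lbl}(\langle\rangle)=\emptyset$, $\mathit{lbl}(\langle l:\sigma\rangle)=\{l\}$, $\mathit{lbl}(\rho_1\cap\rho_2)=\mathit{lbl}(\rho_1+\rho_2)=\mathit{lbl}(\rho_1)\cup\mathit{lbl}(\rho_2)$. *)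

(* Defs.v *)
From mathcomp Require Import all_boot.
Set Implicit Arguments. Unset Strict Implicit. Unset Printing Implicit Defensive.

Definition label := nat.

(* One raw syntax for T and T_R: record types are a subset of types
   (T_R is included in T), and the intersection operator is shared. *)
Inductive ty : Type :=
| Atom  : nat -> ty
| Omega : ty
| Arrow : ty -> ty -> ty
| Inter : ty -> ty -> ty
| Empty : ty
| Field : label -> ty -> ty
| Plus  : ty -> ty -> ty.

(* wft t : t belongs to the grammar T;  isr t : t belongs to T_R. *)
Fixpoint wft (t : ty) : bool :=
  match t with
  | Atom _ | Omega | Empty => true
  | Arrow a b | Inter a b => wft a && wft b
  | Field _ s => wft s
  | Plus a b => isr a && isr b
  end
with isr (t : ty) : bool :=
  match t with
  | Empty => true
  | Field _ s => wft s
  | Plus a b | Inter a b => isr a && isr b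
  | _ => false
  end.

Fixpoint lbl (t : ty) : seq label :=
  match t with
  | Field l _ => [:: l]
  | Inter a b | Plus a b => lbl a ++ lbl b
  | _ => [::]
  end.

(* Equational axioms  A = B  (each yields A <= B and B <= A). *)
Inductive axeq : ty -> ty -> Prop :=
| ax_plus_empty_r r : isr r -> axeq (Plus r Empty) r
| ax_plus_empty_l r : isr r -> axeq (Plus Empty r) r
| ax_plus_assoc r1 r2 r3 : isr r1 -> isr r2 -> isr r3 ->
    axeq (Plus (Plus r1 r2) r3) (Plus r1 (Plus r2 r3))
| ax_plus_inter r1 r2 r3 : isr r1 -> isr r2 -> isr r3 ->
    axeq (Plus (Inter r1 r2) r3) (Inter (Plus r1 r3) (Plus r2 r3))
| ax_plus_field_same l s t r : wft s -> wft t -> isr r ->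
    axeq (Plus (Field l s) (Inter (Field l t) r)) (Inter (Field l t) r)
| ax_plus_field_diff l l' s t r : l <> l' -> wft s -> wft t -> isr r ->
    axeq (Plus (Field l s) (Inter (Field l' t) r))
         (Inter (Field l' t) (Plus (Field l s) r)).

Inductive sub : ty -> ty -> Prop :=
| sub_refl s : wft s -> sub s s
| sub_trans s t u : sub s t -> sub t u -> sub s u
| sub_omega s : wft s -> sub s Omega
| sub_omega_arrow : sub Omega (Arrow Omega Omega)
| sub_inter_l s t : wft s -> wft t -> sub (Inter s t) s
| sub_inter_r s t : wft s -> wft t -> sub (Inter s t) t
| sub_inter_glb s t1 t2 : sub s t1 -> sub s t2 -> sub s (Inter t1 t2)
| sub_arrow_inter s t1 t2 : wft s -> wft t1 -> wft t2 ->
    sub (Inter (Arrow s t1) (Arrow s t2)) (Arrow s (Inter t1 t2))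
| sub_arrow s1 s2 t1 t2 : sub s2 s1 -> sub t1 t2 ->
    sub (Arrow s1 t1) (Arrow s2 t2)
| sub_field_empty l s : wft s -> sub (Field l s) Empty
| sub_field_inter l s t : wft s -> wft t ->
    sub (Inter (Field l s) (Field l t)) (Field l (Inter s t))
| sub_field l s t : sub s t -> sub (Field l s) (Field l t)
| sub_ax_l a b : axeq a b -> sub a b
| sub_ax_r a b : axeq a b -> sub b a
| sub_plus_mono r1 r2 r : isr r1 -> isr r2 -> isr r -> sub r1 r2 ->
    sub (Plus r1 r) (Plus r2 r)
| sub_plus_cong r r1 r2 : isr r -> isr r1 -> isr r2 -> sub r1 r2 -> sub r2 r1 ->
    sub (Plus r r1) (Plus r r2).

Definition teq (s t : ty) : Prop := sub s t /\ sub t s.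

(* Main.v *)
From Pilot Require Import Defs.
From mathcomp Require Import all_boot.
Set Implicit Arguments.

Lemma isr_wft t : isr t -> wft t.
Proof. elim: t => //= a IHa b IHb /andP[/IHa -> /IHb ->] //. Qed.

Lemma axeq_wft a b : axeq a b -> wft a && wft b.
Proof.
case=> /= *; repeat (apply/andP; split); first [done | assumption | apply: isr_wft; assumption].
Qed.

Lemma sub_wft s t : sub s t -> wft s && wft t.
Proof.
elim=> //=; clear.
- by move=> s ->.
- by move=> s t u _ /andP[-> _] _ /andP[_ ->].
- by move=> s ->.
- by move=> s t -> ->.
- by move=> s t -> ->.
- by move=> s t1 t2 _ /andP[-> ->] _ /andP[_ ->].
- by move=> s t1 t2 -> -> ->.
- by move=> s1 s2 t1 t2 _ /andP[-> ->] _ /andP[-> ->].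
- by move=> l s ->.
- by move=> l s t -> ->.
- by move=> a b /axeq_wft.
- by move=> a b /axeq_wft /andP[-> ->].
- by move=> r1 r2 r -> -> ->.
- by move=> r r1 r2 -> -> ->.
Qed.

Lemma axeq_lbl a b : axeq a b -> lbl a =i lbl b.
Proof.
case=> /= *; move=> x; rewrite /= ?mem_cat ?in_nil ?inE ?orbF;
repeat match goal with |- context [?z \in ?s] => case: (z \in s) | |- context [?z == ?y] => case: (z == y) end; done.
Qed.

Lemma sub_lbl s t : sub s t -> {subset lbl t <= lbl s}.
Proof.
elim=> //=; clear.
- by move=> *; move=> ?.
- by move=> s t u _ H1 _ H2 x /H2 /H1.
- by move=> s t _ _ x; rewrite mem_cat => ->.
- by move=> s t _ _ x; rewrite mem_cat orbC => ->.
- by move=> s t1 t2 _ H1 _ H2 x; rewrite mem_cat => /orP[/H1|/H2].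
- by move=> l s t _ _ x; rewrite !inE => ->.
- by move=> *; move=> ?.
- by move=> a b /axeq_lbl H x; rewrite H.
- by move=> a b /axeq_lbl H x; rewrite H.
- by move=> r1 r2 r _ _ _ _ H x; rewrite !mem_cat => /orP[/H ->|->] //; rewrite orbT.
- by move=> r r1 r2 _ _ _ _ H _ _ x; rewrite !mem_cat => /orP[->|/H ->] //; rewrite orbT.
Qed.
Import Pilot.Defs.
Fixpoint nf (t : ty) : bool :=
  match t with
  | Empty => true
  | Inter (Field _ s) n => wft s && nf n
  | _ => false
  end.

Lemma nf_isr n : nf n -> isr n.
Proof. elim: n => //= a _ n IH; case: a => // l s /andP[ws /IH ->]; by rewrite /= ws. Qed.

Ltac wf := solve [ repeat first [ done | assumption | apply: isr_wft; assumption
  | apply: nf_isr; assumption | apply: isr_wft; apply: nf_isr; assumption | progress simpl | apply/andP; split ] ].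

Lemma teq_wft a b : teq a b -> wft a && wft b.
Proof. by case=> /sub_wft. Qed.

Lemma teq_refl t : wft t -> teq t t.
Proof. by move=> w; split; apply: sub_refl. Qed.

Lemma teq_sym a b : teq a b -> teq b a.
Proof. by case. Qed.

Lemma teq_trans a b c : teq a b -> teq b c -> teq a c.
Proof. by case=> H1 H2 [H3 H4]; split; apply: sub_trans; eassumption. Qed.

Lemma ax_teq a b : axeq a b -> teq a b.
Proof. by move=> H; split; [apply: sub_ax_l | apply: sub_ax_r]. Qed.

Lemma teq_lbl a b : teq a b -> lbl a =i lbl b.
Proof. by case=> /sub_lbl H1 /sub_lbl H2 x; apply/idP/idP => [/H2|/H1]. Qed.

Lemma inter_l' a b c : sub a c -> wft b -> sub (Inter a b) c.
Proof.
move=> H wb; apply: (sub_trans _ H); apply: sub_inter_l => //.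
by case/andP: (sub_wft H).
Qed.

Lemma inter_r' a b c : sub b c -> wft a -> sub (Inter a b) c.
Proof.
move=> H wa; apply: (sub_trans _ H); apply: sub_inter_r => //.
by case/andP: (sub_wft H).
Qed.

Ltac isolve :=
  match goal with
  | |- sub _ (Inter _ _) => apply: sub_inter_glb; isolve
  | _ => first [ apply: sub_refl; assumption
               | apply: inter_l'; [isolve | wf]
               | apply: inter_r'; [isolve | wf] ]
  end.

Lemma inter_cong a a' b b' : teq a a' -> teq b b' -> teq (Inter a b) (Inter a' b').
Proof.
move=> [H1 H2] [H3 H4].
move: (sub_wft H1) (sub_wft H3) => /andP[wa wa'] /andP[wb wb'].
split; apply: sub_inter_glb.
- exact: inter_l'.
- exact: inter_r'.
- exact: inter_l'.
- exact: inter_r'.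
Qed.

Lemma plus_cong a a' b b' : isr a -> isr a' -> isr b -> isr b' ->
  teq a a' -> teq b b' -> teq (Plus a b) (Plus a' b').
Proof.
move=> ia ia' ib ib' [H1 H2] [H3 H4]; split.
- apply: sub_trans (sub_plus_mono ia ia' ib H1) _; exact: sub_plus_cong.
- apply: sub_trans (sub_plus_mono ia' ia ib' H2) _; exact: sub_plus_cong.
Qed.

Lemma inter_idem a : wft a -> teq (Inter a a) a.
Proof. by move=> *; split; isolve. Qed.
Lemma inter_swap a b c : wft a -> wft b -> wft c ->
  teq (Inter b (Inter a c)) (Inter a (Inter b c)).
Proof. by move=> *; split; isolve. Qed.
Lemma inter_assoc a b c : wft a -> wft b -> wft c ->
  teq (Inter (Inter a b) c) (Inter a (Inter b c)).
Proof. by move=> *; split; isolve. Qed.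
Lemma inter_distr a b c : wft a -> wft b -> wft c ->
  teq (Inter (Inter a c) (Inter b c)) (Inter (Inter a b) c).
Proof. by move=> *; split; isolve. Qed.
Lemma inter_swap4 a b c d : wft a -> wft b -> wft c -> wft d ->
  teq (Inter (Inter a b) (Inter c d)) (Inter (Inter a c) (Inter b d)).
Proof. by move=> *; split; isolve. Qed.
Lemma inter_distl a b c : wft a -> wft b -> wft c ->
  teq (Inter (Inter a b) (Inter a c)) (Inter a (Inter b c)).
Proof. by move=> *; split; isolve. Qed.

Lemma nf_le_empty n : nf n -> sub n Empty.
Proof.
elim: n => //= [a _ n IH|]; last by move=> _; apply: sub_refl.
case: a => // l s /andP[ws nn].
by apply: inter_r' _ (IH nn) _.
Qed.

Lemma field_inter_empty l s : wft s -> teq (Field l s) (Inter (Field l s) Empty).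
Proof.
move=> ws; split.
- apply: sub_inter_glb; [exact: sub_refl | exact: sub_field_empty].
- by apply: sub_inter_l.
Qed.
Arguments field_inter_empty l [s] _.

Lemma field_plus_nf l s n : wft s -> nf n ->
  (l \in lbl n -> teq (Plus (Field l s) n) n) /\
  (l \notin lbl n -> teq (Plus (Field l s) n) (Inter (Field l s) n)).
Proof.
move=> ws; elim: n => //= [a _ n IH|]; last first.
  move=> _; split => [|_]; first by rewrite in_nil.
  apply: teq_trans _ (field_inter_empty l ws).
  by apply: ax_teq; apply: ax_plus_empty_r.
case: a => // l' t /andP[wt nn].
have [IH1 IH2] := IH nn.
rewrite inE; case: eqP => [<-|ne] /=.
  split => // _; apply: ax_teq; apply: ax_plus_field_same => //; wf.
split => H.
- apply: teq_trans (ax_teq (ax_plus_field_diff ne ws wt (nf_isr _ nn))) _.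
  apply: inter_cong (IH1 H); apply: teq_refl; wf.
- apply: teq_trans (ax_teq (ax_plus_field_diff ne ws wt (nf_isr _ nn))) _.
  apply: teq_trans (inter_cong (@teq_refl (Field l' t) wt) (IH2 H)) _.
  apply: inter_swap; wf.
Qed.

Arguments field_plus_nf l [s n] _ _.
Lemma nf_inter a b : nf a -> nf b -> exists2 n, nf n & teq (Inter a b) n.
Proof.
elim: a => //= [a _ a' IH|]; last first.
  move=> _ nb; exists b => //; split.
  - apply: inter_r'; [apply: sub_refl | ]; wf.
  - apply: sub_inter_glb; [exact: nf_le_empty | apply: sub_refl; wf].
case: a => // l s /andP[ws na'] nb.
have [n nn H] := IH na' nb.
exists (Inter (Field l s) n); first by rewrite /= ws.
eapply teq_trans; [apply: inter_assoc; wf | ].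
apply: inter_cong H; apply: teq_refl; wf.
Qed.
Arguments nf_inter [a b] _ _.

Lemma nf_plus a b : nf a -> nf b -> exists2 n, nf n & teq (Plus a b) n.
Proof.
elim: a => //= [a _ a' IH|]; last first.
  move=> _ nb; exists b => //; apply: ax_teq; apply: ax_plus_empty_l; wf.
case: a => // l s /andP[ws na'] nb.
have [m2 nm2 H2] := IH na' nb.
have [m1 nm1 H1] : exists2 m1, nf m1 & teq (Plus (Field l s) b) m1.
  have [F1 F2] := field_plus_nf l ws nb.
  case: (boolP (l \in lbl b)) => H.
  - by exists b => //; apply: F1.
  - by exists (Inter (Field l s) b); [rewrite /= ws | apply: F2].
have [n nn H] := nf_inter nm1 nm2.
exists n => //.
apply: teq_trans (ax_teq (ax_plus_inter _ _ _)) _; try wf.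
by apply: teq_trans (inter_cong H1 H2) H.
Qed.
Arguments nf_plus [a b] _ _.

Lemma nf_exists r : isr r -> exists2 n, nf n & teq r n.
Proof.
elim: r => //=.
- move=> a IHa b IHb /andP[ia ib].
  have [na nna Ha] := IHa ia; have [nb nnb Hb] := IHb ib.
  have [n nn H] := nf_inter nna nnb.
  by exists n => //; apply: teq_trans (inter_cong Ha Hb) H.
- by move=> _; exists Empty => //; apply: teq_refl.
- move=> l s _ ws; exists (Inter (Field l s) Empty); first by rewrite /= ws.
  exact: field_inter_empty.
- move=> a IHa b IHb /andP[ia ib].
  have [na nna Ha] := IHa ia; have [nb nnb Hb] := IHb ib.
  have [n nn H] := nf_plus nna nnb.
  exists n => //; apply: teq_trans H.
  apply: plus_cong => //; wf.
Qed.
Arguments nf_exists [r] _.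

Lemma rec_le_empty r : isr r -> sub r Empty.
Proof.
move=> /nf_exists [n nn [H _]]; apply: sub_trans H _; exact: nf_le_empty.
Qed.

Lemma field_plus l s r : wft s -> isr r ->
  (l \in lbl r -> teq (Plus (Field l s) r) r) /\
  (l \notin lbl r -> teq (Plus (Field l s) r) (Inter (Field l s) r)).
Proof.
move=> ws ir; have [n nn H] := nf_exists ir.
have HL := teq_lbl H.
have HP : teq (Plus (Field l s) r) (Plus (Field l s) n).
  apply: plus_cong => //; try wf; apply: teq_refl; wf.
have [F1 F2] := field_plus_nf l ws nn.
split => Hl.
- apply: teq_trans HP _; apply: teq_trans (F1 _) (teq_sym H); by rewrite -HL.
- apply: teq_trans HP _; apply: teq_trans (F2 _) _; first by rewrite -HL.
  apply: inter_cong (teq_sym H); apply: teq_refl; wf.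
Qed.
Arguments field_plus l [s r] _ _.

Lemma P3nf n r : nf n -> isr r -> {subset lbl n <= lbl r} -> teq (Plus n r) r.
Proof.
move=> nn ir; elim: n nn => //= [a _ n IH|]; last first.
  by move=> _ _; apply: ax_teq; apply: ax_plus_empty_l.
case: a => // l s /andP[ws nn] Hs.
apply: teq_trans (ax_teq (ax_plus_inter _ _ _)) _; try wf.
have H1 : teq (Plus (Field l s) r) r.
  by apply: (field_plus l ws ir).1; apply: Hs; rewrite inE eqxx.
have H2 : teq (Plus n r) r.
  by apply: IH => // x Hx; apply: Hs; rewrite inE Hx orbT.
apply: teq_trans (inter_cong H1 H2) _.
apply: inter_idem; wf.
Qed.
Arguments P3nf [n r] _ _ _.

Lemma P2nf n r : nf n -> isr r -> (forall l, l \in lbl n -> l \in lbl r -> False) ->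
  teq (Plus n r) (Inter n r).
Proof.
move=> nn ir; elim: n nn => //= [a _ n IH|]; last first.
  move=> _ _; apply: teq_trans (ax_teq (ax_plus_empty_l ir)) _.
  split; [apply: sub_inter_glb; [exact: rec_le_empty | apply: sub_refl; wf]
         | apply: inter_r'; [apply: sub_refl|]; wf].
case: a => // l s /andP[ws nn] Hs.
apply: teq_trans (ax_teq (ax_plus_inter _ _ _)) _; try wf.
have H1 : teq (Plus (Field l s) r) (Inter (Field l s) r).
  apply: (field_plus l ws ir).2; apply/negP => Hl.
  by apply: (Hs l) => //; rewrite inE eqxx.
have H2 : teq (Plus n r) (Inter n r).
  by apply: IH => // x Hx; apply: Hs; rewrite inE Hx orbT.
apply: teq_trans (inter_cong H1 H2) _.
apply: inter_distr; wf.
Qed.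
Arguments P2nf [n r] _ _ _.

Lemma P4nf n r2 r3 : nf n -> isr r2 -> isr r3 -> lbl r2 =i lbl r3 ->
  teq (Inter (Plus n r2) (Plus n r3)) (Plus n (Inter r2 r3)).
Proof.
move=> nn i2 i3 HL; elim: n nn => //= [a _ n IH|]; last first.
  move=> _; apply: teq_trans (inter_cong (ax_teq (ax_plus_empty_l i2)) (ax_teq (ax_plus_empty_l i3))) _.
  apply: teq_sym; apply: ax_teq; apply: ax_plus_empty_l; wf.
case: a => // l s /andP[ws nn].
apply: teq_trans (inter_cong (ax_teq (ax_plus_inter _ _ _)) (ax_teq (ax_plus_inter _ _ _))) _; try wf.
eapply teq_trans; [apply: inter_swap4; wf|].
apply: teq_trans _ (teq_sym (ax_teq (ax_plus_inter _ _ _))); try wf.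
apply: inter_cong (IH nn).
have [F21 F22] := field_plus l ws i2.
have [F31 F32] := field_plus l ws i3.
have i23 : isr (Inter r2 r3) by rewrite /= i2 i3.
have [F1 F2] := field_plus l ws i23.
case: (boolP (l \in lbl r2)) => Hl.
- have Hl3 : l \in lbl r3 by rewrite -HL.
  apply: teq_trans (inter_cong (F21 Hl) (F31 Hl3)) _.
  by apply: teq_sym; apply: F1; rewrite /= mem_cat Hl.
- have Hl3 : l \notin lbl r3 by rewrite -HL.
  apply: teq_trans (inter_cong (F22 Hl) (F32 Hl3)) _.
  apply: teq_trans _ (teq_sym (F2 _)); last by rewrite /= mem_cat negb_or Hl Hl3.
  apply: inter_distl; wf.
Qed.
Arguments P4nf [n r2 r3] _ _ _ _.

Unset Implicit Arguments.

Theorem lemma3p10 (r1 r2 r3 : ty) :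
  isr r1 -> isr r2 -> isr r3 ->
  (teq r1 r2 -> lbl r1 =i lbl r2) /\
  ((forall l, l \in lbl r1 -> l \in lbl r2 -> False) ->
     teq (Plus r1 r2) (Inter r1 r2)) /\
  ({subset lbl r1 <= lbl r2} -> teq (Plus r1 r2) r2) /\
  (lbl r2 =i lbl r3 ->
     teq (Inter (Plus r1 r2) (Plus r1 r3)) (Plus r1 (Inter r2 r3))).
Proof.
move=> i1 i2 i3.
have [n nn H] := nf_exists i1.
have HL := teq_lbl H.
have in' : isr n by apply: nf_isr.
have HP : forall r, isr r -> teq (Plus r1 r) (Plus n r).
  by move=> r ir; apply: plus_cong => //; apply: teq_refl; wf.
split; first exact: teq_lbl.
split.
  move=> D; apply: teq_trans (HP _ i2) _.
  apply: teq_trans (P2nf nn i2 _) _.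
    by move=> l; rewrite -HL; apply: D.
  apply: inter_cong (teq_sym H) _; apply: teq_refl; wf.
split.
  move=> S; apply: teq_trans (HP _ i2) _.
  by apply: P3nf => // x; rewrite -HL; apply: S.
move=> E.
have i23 : isr (Inter r2 r3) by rewrite /= i2 i3.
apply: teq_trans (inter_cong (HP _ i2) (HP _ i3)) _.
apply: teq_trans (P4nf nn i2 i3 E) _.
exact: teq_sym (HP _ i23).
Qed.
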